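(* Let $n_x,n_y\ge1$, $n=n_x+n_y+1$, and let $\mathcal{F}\subseteq\mathbb{R}^{n_x+n_y}$ be nonempty and compact. Let $f$ be a quadratic function of $(\mathbf{x},\mathbf{y})\in\mathbb{R}^{n_x}\times\mathbb{R}^{n_y}$ and $\mathbf{Q}\in\mathcal{S}^n$ with $\mathbf{Q}\bullet\mathbf{z}\mathbf{z}^\top=f(\mathbf{x},\mathbf{y})$ for $\mathbf{z}=[1,\mathbf{x}^\top,\mathbf{y}^\top]^\top$; write $q(\mathbf{P})=\mathbf{Q}\bullet\mathbf{P}$. Let $\phi(\mathbf{x})=\inf_{\mathbf{y}}\{f(\mathbf{x},\mathbf{y}):[\mathbf{x}^\top,\mathbf{y}^\top]^\top\in\mathcal{F}\}$ (with $\inf\emptyset=+\infty$). For $\mathbf{x}\in\mathbb{R}^{n_x}$ define $$\mathcal{G}_1(\mathbf{x})=\{\mathbf{P}\in\mathcal{G}(\mathcal{F}) : \text{the }\mathbf{x}\text{-block of }\mathbf{P}\text{ equals }\mathbf{x},\ \text{the }\mathbf{X}\text{-block of }\mathbf{P}\text{ equals }\mathbf{x}\mathbf{x}^\top\},$$ $$\mathcal{G}_2(\mathbf{x})=\{\mathbf{P}\in\mathcal{G}(\mathcal{F}) : \text{the }\mathbf{x}\text{-block equals }\mathbf{x},\ \text{the }\mathbf{X}\text{-block equals }\mathbf{x}\mathbf{x}^\top,\ \text{the }\mathbf{Z}\text{-block equals }\mathbf{y}_{\mathbf{P}}\mathbf{x}^\top\},$$ where $\mathbf{y}_{\mathbf{P}}$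 is the $\mathbf{y}$-block of $\mathbf{P}$. Then $\phi(\mathbf{x})=\inf_{\mathbf{P}}\{q(\mathbf{P}):\mathbf{P}\in\mathcal{G}_j(\mathbf{x})\}$ for $j=1,2$ and all $\mathbf{x}\in\mathbb{R}^{n_x}$. Moreover $\mathcal{G}_1(\mathbf{x})=\mathcal{G}_2(\mathbf{x})$, and both sets remain unchanged if the constraint that the $\mathbf{X}$-block equals $\mathbf{x}\mathbf{x}^\top$ is relaxed to $\operatorname{diag}(\mathbf{X})=\mathbf{x}\circ\mathbf{x}$ (entrywise product).
   Context: $\mathcal{S}^n$ is the space of symmetric $n\times n$ matrices and $\mathbf{A}\bullet\mathbf{B}=\operatorname{tr}(\mathbf{A}^\top\mathbf{B})$. $\mathcal{G}(\mathcal{F})=\operatorname{cl}\operatorname{conv}\{\mathbf{z}\mathbf{z}^\top:\mathbf{z}=[1,\mathbf{x}^\top,\mathbf{y}^\top]^\top,\ [\mathbf{x}^\top,\mathbf{y}^\top]^\top\in\mathcal{F}\}$. Every $\mathbf{P}\in\mathcal{S}^n$ is partitioned as $\mathbf{P}=\begin{pmatrix}x_0&\mathbf{x}^\top&\mathbf{y}^\top\\ \mathbf{x}&\mathbf{X}&\mathbf{Z}^\top\\ \mathbf{y}&\mathbf{Z}&\mathbf{Y}\end{pmatrix}$ with $\mathbf{x}\in\mathbb{R}^{n_x}$, $\mathbf{y}\in\mathbb{R}^{n_y}$, $\mathbf{X}\in\mathcal{S}^{n_x}$, $\mathbf{Z}\in\mathbb{R}^{n_y\times n_x}$, $\mathbf{Y}\in\mathcal{S}^{n_y}$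 (these are the ''blocks'' referred to). The infimum over an empty set is $+\infty$. *)

(* Defs.v *)
From HB Require Import structures.
From mathcomp Require Import all_boot all_order all_algebra.
From mathcomp Require Import all_classical all_reals topology ereal normedtype.
Import numFieldNormedType.Exports.
Set Implicit Arguments. Unset Strict Implicit. Unset Printing Implicit Defensive.
Import Order.TTheory GRing.Theory Num.Theory.
Local Open Scope ring_scope.
Local Open Scope classical_set_scope.

Section Defs.
Variables (R : realType) (nx ny : nat).

Notation N := (1 + (nx + ny))%N.

Definition frob {m : nat} (A B : 'M[R]_m) : R := \tr (A^T *m B).

Definition zvec (x : 'cV[R]_nx) (y : 'cV[R]_ny) : 'cV[R]_N :=
  col_mx (1 : 'cV[R]_1) (col_mx x y).

Definition conv_hull {m : nat} (S : set 'M[R]_m) : set 'M[R]_m :=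
  [set P | exists (k : nat) (lam : 'I_k -> R) (A : 'I_k -> 'M[R]_m),
     (forall i, 0 <= lam i) /\ \sum_(i < k) lam i = 1 /\
     (forall i, S (A i)) /\ P = \sum_(i < k) lam i *: A i].

Definition GF (F : set 'cV[R]_(nx + ny)) : set 'M[R]_N :=
  closure (conv_hull [set P | exists (x : 'cV[R]_nx) (y : 'cV[R]_ny),
                         F (col_mx x y) /\ P = zvec x y *m (zvec x y)^T]).

(* blocks of P = [x0 x^T y^T; x X Z^T; y Z Y] *)
Definition xblk (P : 'M[R]_N) : 'cV[R]_nx := usubmx (dlsubmx P).
Definition yblk (P : 'M[R]_N) : 'cV[R]_ny := dsubmx (dlsubmx P).
Definition Xblk (P : 'M[R]_N) : 'M[R]_nx := ulsubmx (drsubmx P).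
Definition Zblk (P : 'M[R]_N) : 'M[R]_(ny, nx) := dlsubmx (drsubmx P).

Definition G1 F (x : 'cV[R]_nx) : set 'M[R]_N :=
  [set P | GF F P /\ xblk P = x /\ Xblk P = x *m x^T].
Definition G2 F (x : 'cV[R]_nx) : set 'M[R]_N :=
  [set P | GF F P /\ xblk P = x /\ Xblk P = x *m x^T /\ Zblk P = yblk P *m x^T].
Definition G1d F (x : 'cV[R]_nx) : set 'M[R]_N :=
  [set P | GF F P /\ xblk P = x /\ (forall i, Xblk P i i = x i 0 * x i 0)].
Definition G2d F (x : 'cV[R]_nx) : set 'M[R]_N :=
  [set P | GF F P /\ xblk P = x /\ (forall i, Xblk P i i = x i 0 * x i 0)
           /\ Zblk P = yblk P *m x^T].

Definition phi F (f : 'cV[R]_nx -> 'cV[R]_ny -> R) (x : 'cV[R]_nx) : \bar R :=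
  ereal_inf [set (f x y)%:E | y in [set y | F (col_mx x y)]].

Definition qinf (Q : 'M[R]_N) (G : set 'M[R]_N) : \bar R :=
  ereal_inf [set (frob Q P)%:E | P in G].

End Defs.

(* Main.v *)
Require Import Defs.
From HB Require Import structures.
From mathcomp Require Import all_boot all_order all_algebra.
From mathcomp Require Import all_classical all_reals topology ereal normedtype.
From mathcomp Require Import ring lra.
Import numFieldNormedType.Exports.
Import Order.TTheory GRing.Theory Num.Theory.
Local Open Scope ring_scope.
Local Open Scope classical_set_scope.
Set Implicit Arguments. Unset Strict Implicit. Unset Printing Implicit Defensive.



Section Aff.
Variables (R : realType) (m : nat).

Definition affl (L : 'M[R]_m -> R) := continuous L /\
  forall k (lam : 'I_k -> R) (A : 'I_k -> 'M[R]_m),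
    L (\sum_(i < k) lam i *: A i) = \sum_(i < k) lam i * L (A i).

Lemma affl_coord i j : affl (fun P => P i j).
Proof.
split; first exact: coord_continuous.
move=> k lam A; rewrite summxE; apply: eq_bigr => l _; by rewrite mxE.
Qed.

Lemma afflD L1 L2 : affl L1 -> affl L2 -> affl (fun P => L1 P + L2 P).
Proof.
move=> [c1 h1] [c2 h2]; split.
  by move=> P; apply: continuousD; [exact: c1|exact: c2].
by move=> k lam A; rewrite h1 h2 -big_split /=; apply: eq_bigr => i _; rewrite mulrDr.
Qed.

Lemma afflZ c L : affl L -> affl (fun P => c * L P).
Proof.
move=> [c1 h1]; split.
  move=> P; have h := (@continuousM R _ (fun=> c) L P (@cst_continuous _ _ c P) (c1 P)); exact: h.
by move=> k lam A; rewrite h1 mulr_sumr; apply: eq_bigr => i _; rewrite mulrCA.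
Qed.

Lemma affl_sum n (L : 'I_n -> 'M[R]_m -> R) : (forall i, affl (L i)) ->
  affl (fun P => \sum_(i < n) L i P).
Proof.
elim: n L => [|n IH] L hL.
  have -> : (fun P : 'M[R]_m => \sum_(i < 0) L i P) = fun=> 0.
    by apply: funext => P; rewrite big_ord0.
  split; first by move=> P; exact: cst_continuous.
  by move=> k lam A; rewrite big1 // => i _; rewrite mulr0.
have -> : (fun P => \sum_(i < n.+1) L i P) = (fun P => \sum_(i < n) L (widen_ord (leqnSn n) i) P + L ord_max P).
  by apply: funext => P; rewrite big_ord_recr.
apply: afflD; last exact: hL.
by apply: IH => i; exact: hL.
Qed.

Lemma affl_closure (K : set 'M[R]_m) L c : affl L ->
  (forall P, K P -> c <= L P) -> forall P, closure (conv_hull K) P -> c <= L P.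
Proof.
move=> [cL hL] hK P.
have cS : closed (L @^-1` [set r | c <= r]).
  by apply: preimage_closed; [move=> y _; exact: cL|exact: closed_ge].
have sub : conv_hull K `<=` L @^-1` [set r | c <= r].
  move=> Q [k [lam [A [h0 [h1 [hA ->]]]]]] /=.
  rewrite hL -[c]mul1r -h1 mulr_suml; apply: ler_sum => i _.
  exact: (ler_wpM2l (h0 i) (hK _ (hA i))).
by move=> /(closureS sub); move: cS => /closure_id <-.
Qed.
End Aff.



Section Blk.
Variables (R : realType) (nx ny : nat).
Notation N := (1 + (nx + ny))%N.
Definition i0 : 'I_N := lshift (nx + ny) ord0.
Definition ix (i : 'I_nx) : 'I_N := rshift 1 (lshift ny i).
Definition iy (k : 'I_ny) : 'I_N := rshift 1 (rshift nx k).

Lemma xblkE (P : 'M[R]_N) i : xblk P i ord0 = P (ix i) i0.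
Proof. by rewrite /xblk !mxE. Qed.
Lemma yblkE (P : 'M[R]_N) k : yblk P k ord0 = P (iy k) i0.
Proof. by rewrite /yblk !mxE. Qed.
Lemma XblkE (P : 'M[R]_N) i j : Xblk P i j = P (ix i) (ix j).
Proof. by rewrite /Xblk !mxE. Qed.
Lemma ZblkE (P : 'M[R]_N) k i : Zblk P k i = P (iy k) (ix i).
Proof. by rewrite /Zblk !mxE. Qed.

Lemma zz_ent n (z : 'cV[R]_n) a b : (z *m z^T) a b = z a 0 * z b 0.
Proof. by rewrite !mxE big_ord1 !mxE. Qed.

Lemma z0 (w : 'cV[R]_(nx + ny)) : (col_mx (1 : 'cV[R]_1) w) i0 0 = 1.
Proof. by rewrite /i0 col_mxEu mxE. Qed.
Lemma zx (w : 'cV[R]_(nx + ny)) i : (col_mx (1 : 'cV[R]_1) w) (ix i) 0 = w (lshift ny i) 0.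
Proof. by rewrite /ix col_mxEd. Qed.
Lemma zy (w : 'cV[R]_(nx + ny)) k : (col_mx (1 : 'cV[R]_1) w) (iy k) 0 = w (rshift nx k) 0.
Proof. by rewrite /iy col_mxEd. Qed.
Lemma wx (x : 'cV[R]_nx) (y : 'cV[R]_ny) i : (col_mx x y) (lshift ny i) 0 = x i 0.
Proof. by rewrite col_mxEu. Qed.
Lemma wy (x : 'cV[R]_nx) (y : 'cV[R]_ny) k : (col_mx x y) (rshift nx k) 0 = y k 0.
Proof. by rewrite col_mxEd. Qed.

Definition Kset (F : set 'cV[R]_(nx + ny)) : set 'M[R]_N :=
  [set P | exists (x : 'cV[R]_nx) (y : 'cV[R]_ny),
                         F (col_mx x y) /\ P = zvec x y *m (zvec x y)^T].

Lemma Kset_ge (F : set 'cV[R]_(nx + ny)) (L : 'M[R]_N -> R) c : affl L ->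
  (forall w, F w -> c <= L (col_mx 1 w *m (col_mx 1 w)^T)) ->
  forall P, GF F P -> c <= L P.
Proof.
move=> hL hw; apply: affl_closure => // P [x [y [Fw ->]]].
exact: hw.
Qed.

Lemma GF00 (F : set 'cV[R]_(nx + ny)) P : GF F P -> P i0 i0 = 1.
Proof.
move=> hP; apply/eqP; rewrite eq_le; apply/andP; split.
  have := @Kset_ge F (fun P => -1 * P i0 i0) (-1) (afflZ _ (affl_coord _ i0 i0)) _ P hP.
  rewrite mulN1r lerN2; apply.
  by move=> w _; rewrite zz_ent z0 !mulN1r mulr1.
apply: (Kset_ge (L := fun P => P i0 i0)) hP; first exact: affl_coord.
by move=> w _; rewrite zz_ent z0 mulr1.
Qed.

Lemma eps_lemma (a c : R) : (forall e, 0 < e -> 0 <= a + e * c) -> 0 <= a.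
Proof.
move=> h; rewrite leNgt; apply/negP => a0.
have [c0|c0] := lerP c 0.
  by have := h 1 ltr01; lra.
have e0 : 0 < - a / (2 * c) by rewrite divr_gt0 // ?oppr_gt0 // mulr_gt0.
have := h _ e0.
have -> : - a / (2 * c) * c = - a / 2 by field; rewrite gt_eqF.
lra.
Qed.

Lemma key_half (F : set 'cV[R]_(nx + ny)) (x : 'cV[R]_nx) P s (i : 'I_nx) (b : 'I_N) :
  s * s = 1 -> GF F P -> xblk P = x -> (forall i, Xblk P i i = x i 0 * x i 0) ->
  0 <= s * (P b (ix i) - x i 0 * P b i0).
Proof.
move=> hs hP hx hX.
set xi := x i 0.
have P00 := GF00 hP.
have Pa0 : P (ix i) i0 = xi by rewrite -xblkE hx.
have Paa : P (ix i) (ix i) = xi * xi by rewrite -XblkE hX.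
suff h : forall t, 0 < t -> 0 <= 2 * s * (P b (ix i) - xi * P b i0) + t * P b b.
  have := eps_lemma h; rewrite -mulrA; nra.
move=> t t0.
have hL : affl (fun Q : 'M[R]_N => 1 * Q (ix i) (ix i) + ((-2 * xi) * Q (ix i) i0 +
   ((xi * xi) * Q i0 i0 + ((2 * t * s) * Q b (ix i) + ((- 2 * t * s * xi) * Q b i0 +
     (t * t) * Q b b))))).
  by do 5 (apply: afflD; first exact/afflZ/affl_coord); exact/afflZ/affl_coord.
have hw : forall w, F w -> 0 <= 1 * (col_mx 1 w *m (col_mx 1 w)^T) (ix i) (ix i) + ((-2 * xi) * (col_mx 1 w *m (col_mx 1 w)^T) (ix i) i0 +
   ((xi * xi) * (col_mx 1 w *m (col_mx 1 w)^T) i0 i0 + ((2 * t * s) * (col_mx 1 w *m (col_mx 1 w)^T) b (ix i) + ((- 2 * t * s * xi) * (col_mx 1 w *m (col_mx 1 w)^T) b i0 +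
     (t * t) * (col_mx 1 w *m (col_mx 1 w)^T) b b)))).
  move=> w _; rewrite !zz_ent z0.
  set za := (col_mx 1 w) (ix i) 0; set zb := (col_mx 1 w) b 0.
  have -> : 1 * (za * za) + (-2 * xi * (za * 1) + (xi * xi * (1 * 1) + (2 * t * s * (zb * za) +
     (-2 * t * s * xi * (zb * 1) + t * t * (zb * zb))))) =
     (za - xi + t * s * zb) ^+ 2 + t ^+ 2 * zb ^+ 2 * (1 - s * s) by ring.
  by rewrite hs subrr mulr0 addr0 sqr_ge0.
have := Kset_ge hL hw hP.
rewrite P00 Pa0 Paa => H.
have {}H : 0 <= t * (2 * s * (P b (ix i) - xi * P b i0) + t * P b b).
  apply: le_trans H _; rewrite le_eqVlt; apply/orP; left; apply/eqP; ring.
by rewrite pmulr_rge0 in H.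
Qed.

Lemma key_off (F : set 'cV[R]_(nx + ny)) (x : 'cV[R]_nx) P (i : 'I_nx) (b : 'I_N) :
  GF F P -> xblk P = x -> (forall i, Xblk P i i = x i 0 * x i 0) ->
  P b (ix i) = x i 0 * P b i0.
Proof.
move=> hP hx hX.
have h1 := key_half (s := 1) i b (mulr1 1) hP hx hX.
have h2 := key_half (s := -1) i b (etrans (mulrNN 1 1) (mulr1 1)) hP hx hX.
lra.
Qed.
End Blk.



Lemma compact_t (R : realType) n (F : set 'cV[R]_n) (g d : 'cV[R]_n -> R) (m : R) :
  compact F -> continuous g -> continuous d -> (forall w, 0 <= d w) ->
  (forall w, F w -> d w = 0 -> m < g w) ->
  exists t, forall w, F w -> m < g w + t * d w.
Proof.
move=> hF hg hd d0 hz.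
have cover : forall w, F w -> \forall w' \near w & t \near (+oo : set_system R), m < g w' + t * d w'.
  move=> w Fw.
  have [dw0|dwpos] : d w = 0 \/ 0 < d w.
    by have := d0 w; rewrite le_eqVlt => /orP [/eqP <-|->]; [left|right].
  + have gw := hz w Fw dw0.
    exists ([set w' | m < g w'], [set t : R | 0 < t]); first split.
    * exact: (cvgr_gt _ (hg w) _ gw).
    * exact: nbhs_pinfty_gt.
    move=> [w' t] [/= h1 h2].
    have := d0 w'; have : 0 <= t * d w' by rewrite mulr_ge0 // ?ltW // d0.
    lra.
  + set T0 := 2 * (`|m - g w| + 1) / d w.
    exists ([set w' | d w / 2 < d w'] `&` [set w' | g w - 1 < g w'], [set t : R | T0 < t]); first split.
    * have a1 : d w / 2 < d w by lra.
      have a2 : g w - 1 < g w by lra.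
      exact: (filterI (cvgr_gt _ (hd w) _ a1) (cvgr_gt _ (hg w) _ a2)).
    * exact: (@nbhs_pinfty_gt R T0 (num_real T0)).
    move=> [w' t] [[/= h1 h3] /= h2].
    have T00 : 0 <= T0 by rewrite /T0 divr_ge0 ?ltW //; rewrite mulr_ge0 //; lra.
    have t0 : 0 < t by lra.
    have e1 : t * (d w / 2) <= t * d w' by rewrite ler_pM2l //; lra.
    have e2 : T0 * (d w / 2) = `|m - g w| + 1.
      by rewrite /T0; field; rewrite gt_eqF.
    have e3 : T0 * (d w / 2) < t * (d w / 2) by rewrite ltr_pM2r //; lra.
    have := ler_norm (m - g w).
    lra.
have H : \forall t \near (+oo : set_system R), F `<=` (fun w => m < g w + t * d w).
  have hc := (compact_near_coveringP F).1 hF.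
  exact: (hc R (+oo : set_system R) (fun t w => m < g w + t * d w) _ cover).
have [t _ ht] := pinfty_ex_gt0 H; by exists t.
Qed.



Section Cont.
Variables (R : realType) (T : topologicalType).
Lemma cont_add (f g : T -> R) : continuous f -> continuous g -> continuous (fun t => f t + g t).
Proof. by move=> cf cg t; apply: continuousD; [exact: cf|exact: cg]. Qed.
Lemma cont_mul (f g : T -> R) : continuous f -> continuous g -> continuous (fun t => f t * g t).
Proof. by move=> cf cg t; exact: (@continuousM R T f g t (cf t) (cg t)). Qed.
Lemma cont_cst (c : R) : continuous (fun _ : T => c).
Proof. by move=> t; exact: cst_continuous. Qed.
Lemma cont_sum n (h : 'I_n -> T -> R) : (forall i, continuous (h i)) ->
  continuous (fun t => \sum_(i < n) h i t).
Proof.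
elim: n h => [|n IH] h hh.
  have -> : (fun t => \sum_(i < 0) h i t) = fun=> 0 by apply: funext => t; rewrite big_ord0.
  exact: cont_cst.
have -> : (fun t => \sum_(i < n.+1) h i t) = (fun t => \sum_(i < n) h (widen_ord (leqnSn n) i) t + h ord_max t).
  by apply: funext => t; rewrite big_ord_recr.
by apply: cont_add; [apply: IH => i; exact: hh|exact: hh].
Qed.
End Cont.

Lemma frobE (R : realType) m (A B : 'M[R]_m) :
  frob A B = \sum_(a < m) \sum_(b < m) A b a * B b a.
Proof. rewrite /frob /mxtrace; apply: eq_bigr => a _; rewrite mxE; apply: eq_bigr => b _; by rewrite mxE. Qed.

Lemma cont_z (R : realType) p (b : 'I_(1 + p)) :
  continuous (fun w : 'cV[R]_p => (col_mx (1 : 'cV[R]_1) w) b 0).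
Proof.
have -> : b = unsplit (fintype.split b) by rewrite splitK.
case: (fintype.split b) => [j|k] /=.
  have -> : (fun w : 'cV[R]_p => (col_mx (1 : 'cV[R]_1) w) (lshift p j) 0) = fun=> (1 : 'cV[R]_1) j 0.
    by apply: funext => w; rewrite col_mxEu.
  exact: cont_cst.
have -> : (fun w : 'cV[R]_p => (col_mx (1 : 'cV[R]_1) w) (rshift 1 k) 0) = fun w => w k 0.
  by apply: funext => w; rewrite col_mxEd.
exact: coord_continuous.
Qed.



Lemma ereal_le_fin (R : realType) (a : \bar R) (b : R) :
  (forall m : R, (m%:E < a)%E -> m <= b) -> (a <= b%:E)%E.
Proof.
case: a => [r| |] h.
- rewrite lee_fin leNgt; apply/negP => hb.
  have h1 : (r + b) / 2 < r by lra.
  have := h _ (h1 : ((r + b) / 2)%:E < r%:E)%E.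
  lra.
- have H := h (b + 1) (ltry _); clear h; exfalso; lra.
- by rewrite leNye.
Qed.

Section Main.
Variables (R : realType) (nx ny : nat).
Notation N := (1 + (nx + ny))%N.

Lemma G1d_sub_G2 (F : set 'cV[R]_(nx + ny)) x : G1d F x `<=` G2 F x.
Proof.
move=> P [hP [hx hX]]; split => //; split => //; split.
  apply/matrixP => a c; rewrite XblkE (key_off c (ix ny a) hP hx hX) zz_ent -xblkE hx.
  by rewrite mulrC.
apply/matrixP => k c; rewrite ZblkE (key_off c (iy nx k) hP hx hX) -yblkE !mxE big_ord1 !mxE.
by rewrite mulrC.
Qed.

Lemma phi_le_q (F : set 'cV[R]_(nx + ny)) (hFc : compact F)
  (f : 'cV[R]_nx -> 'cV[R]_ny -> R) (Q : 'M[R]_N)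
  (hQf : forall x y, frob Q (zvec x y *m (zvec x y)^T) = f x y) x P :
  G1 F x P -> (phi F f x <= (frob Q P)%:E)%E.
Proof.
move=> [hP [hx hX]].
apply: ereal_le_fin => m hm.
pose g := fun w : 'cV[R]_(nx + ny) => frob Q (col_mx 1 w *m (col_mx 1 w)^T).
pose d := fun w : 'cV[R]_(nx + ny) => \sum_(i < nx) (w (lshift ny i) 0 - x i 0) ^+ 2.
have cg : continuous g.
  have -> : g = fun w => \sum_(a < N) \sum_(b < N) Q b a * ((col_mx 1 w) b 0 * (col_mx 1 w) a 0).
    apply: funext => w; rewrite /g frobE; apply: eq_bigr => a _; apply: eq_bigr => b _.
    by rewrite zz_ent.
  apply: cont_sum => a; apply: cont_sum => b; apply: cont_mul; first exact: cont_cst.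
  by apply: cont_mul; exact: cont_z.
have cd : continuous d.
  apply: cont_sum => i.
  have -> : (fun w : 'cV[R]_(nx + ny) => (w (lshift ny i) 0 - x i 0) ^+ 2) =
    fun w => (w (lshift ny i) 0 - x i 0) * (w (lshift ny i) 0 - x i 0).
    by apply: funext => w; rewrite expr2.
  by apply: cont_mul; apply: cont_add; [exact: coord_continuous|exact: cont_cst|exact: coord_continuous|exact: cont_cst].
have d0 : forall w, 0 <= d w by move=> w; apply: sumr_ge0 => i _; exact: sqr_ge0.
have hz : forall w, F w -> d w = 0 -> m < g w.
  move=> w Fw dw0.
  have ex : forall i, w (lshift ny i) 0 = x i 0.
    move=> i; have := psumr_eq0P (fun i _ => sqr_ge0 (w (lshift ny i) 0 - x i 0)) dw0 (i := i) isT.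
    by move/eqP; rewrite sqrf_eq0 subr_eq0 => /eqP.
  have ux : usubmx w = x by apply/matrixP => i j; rewrite (ord1 j) mxE ex.
  have Fw' : F (col_mx x (dsubmx w)) by rewrite -ux vsubmxK.
  have hle : (phi F f x <= (f x (dsubmx w))%:E)%E.
    by apply: ereal_inf_lbound; exists (dsubmx w).
  have ef : f x (dsubmx w) = g w by rewrite -hQf /zvec -ux vsubmxK.
  by have := lt_le_trans hm hle; rewrite ef lte_fin.
have [t ht] := compact_t hFc cg cd d0 hz.
pose L := fun P : 'M[R]_N => (\sum_(a < N) \sum_(b < N) Q b a * P b a) +
  t * \sum_(i < nx) (1 * P (ix ny i) (ix ny i) + ((-2 * x i 0) * P (ix ny i) (i0 nx ny) +
     (x i 0 * x i 0) * P (i0 nx ny) (i0 nx ny))).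
have hL : affl L.
  apply: afflD.
    by apply: affl_sum => a; apply: affl_sum => b; exact/afflZ/affl_coord.
  apply: afflZ; apply: affl_sum => i.
  by do 2 (apply: afflD; first exact/afflZ/affl_coord); exact/afflZ/affl_coord.
have hw : forall w, F w -> m <= L (col_mx 1 w *m (col_mx 1 w)^T).
  move=> w Fw; apply/ltW; apply: (lt_le_trans (ht w Fw)).
  rewrite le_eqVlt; apply/orP; left; apply/eqP.
  rewrite /L /g /d frobE; congr (_ + t * _); apply: eq_bigr => i _.
  by rewrite !zz_ent z0 zx; ring.
have := Kset_ge hL hw hP.
have -> : L P = frob Q P.
  rewrite /L frobE [X in _ + t * X]big1 ?mulr0 ?addr0 // => i _.
  rewrite -XblkE hX -xblkE hx (GF00 hP) zz_ent; ring.
by [].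
Qed.
End Main.

Unset Implicit Arguments.
Theorem theorem3 (R : realType) (nx ny : nat) (hnx : (1 <= nx)%N) (hny : (1 <= ny)%N)
  (F : set 'cV[R]_(nx + ny)) (hFne : F !=set0) (hFc : compact F)
  (f : 'cV[R]_nx -> 'cV[R]_ny -> R) (Q : 'M[R]_(1 + (nx + ny)))
  (hQsym : Q^T = Q)
  (hQf : forall x y, frob Q (zvec x y *m (zvec x y)^T) = f x y) :
  forall x : 'cV[R]_nx,
    phi F f x = qinf Q (G1 F x) /\
    phi F f x = qinf Q (G2 F x) /\
    G1 F x = G2 F x /\
    G1d F x = G1 F x /\
    G2d F x = G2 F x.
Proof.
move=> x.
have s1 : G1 F x `<=` G1d F x.
  move=> P [hP [hx hX]]; split => //; split => // i; by rewrite hX zz_ent.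
have s2 : G2 F x `<=` G1 F x by move=> P [hP [hx [hX _]]].
have s3 : G2d F x `<=` G1d F x by move=> P [hP [hx [hX _]]].
have s4 : G2 F x `<=` G2d F x.
  move=> P [hP [hx [hX hZ]]]; split => //; split => //; split => // i; by rewrite hX zz_ent.
have s5 := @G1d_sub_G2 R nx ny F x.
have e12 : G1 F x = G2 F x by apply/seteqP; split => // P /s1 /s5.
have e1d : G1d F x = G1 F x by apply/seteqP; split => // P /s5 /s2.
have e2d : G2d F x = G2 F x by apply/seteqP; split => // P /s3 /s5.
have hphi : phi F f x = qinf Q (G1 F x).
  apply/eqP; rewrite eq_le; apply/andP; split.
    apply: le_ereal_inf_tmp => _ [P hP <-]; exact: phi_le_q.
  apply: ereal_inf_le_tmp => _ [y Fy <-].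
  exists (zvec x y *m (zvec x y)^T); last by rewrite hQf.
  split; [|split].
  - apply: subset_closure; exists 1%N, (fun=> 1), (fun=> zvec x y *m (zvec x y)^T).
    split; first by move=> _; exact: ler01.
    split; first by rewrite big_ord1.
    split; first by move=> _; exists x, y.
    by rewrite big_ord1 scale1r.
  - by apply/matrixP => i j; rewrite (ord1 j) xblkE zz_ent /zvec zx wx z0 mulr1.
  - by apply/matrixP => i j; rewrite XblkE !zz_ent /zvec !zx !wx.
split => //; split; first by rewrite -e12.
by split.
Qed.
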